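(* The elements $\delta_{2n}=\Theta(x\otimes\operatorname{ad}_y^{\,2n}(x))$, $n\ge 0$, form a basis of the subspace of $F(L)$ spanned by classes of $x$-degree $2$ (i.e. containing exactly two letters $x$).
   Context: $A=\mathbb{R}\langle x,y\rangle$; $L\subset A$ is the free Lie algebra on $x,y$; $\operatorname{ad}_y(l)=[y,l]=yl-ly$. $F(L)$ is the quotient of $L\otimes L$ by the span of $a\otimes b-b\otimes a$ and $a\otimes[b,c]-[a,b]\otimes c$ ($a,b,c\in L$), with canonical projection $\Theta:L\otimes L\to F(L)$. $F(L)$ is graded by the number of letters $x$ and $y$. *)

(* Defs.v *)
From mathcomp Require Import all_boot all_order all_algebra.
From mathcomp Require Import reals.
Set Implicit Arguments. Unset Strict Implicit. Unset Printing Implicit Defensive.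
Import GRing.Theory Num.Theory.
Local Open Scope ring_scope.

(* Words over the alphabet {x,y}: [false] encodes the letter x, [true] the letter y. *)
Definition word := seq bool.

Section FreeLie.
Variable R : realType.

(* A = R<x,y>, embedded in the algebra of all functions word -> R
   (noncommutative formal power series) with the Cauchy (concatenation) product. *)
Definition A := word -> R.

Definition aadd (f g : A) : A := fun w => f w + g w.
Definition ascale (c : R) (f : A) : A := fun w => c * f w.
Definition amul (f g : A) : A :=
  fun w => \sum_(i < (size w).+1) f (take i w) * g (drop i w).
Definition bracket (f g : A) : A := fun w => amul f g w - amul g f w.

Definition letter (b : bool) : A := fun w => (w == [:: b])%:R.
Definition X : A := letter false.
Definition Y : A := letter true.

(* L = the Lie subalgebra of A generated by x and y (the free Lie algebra). *)
Inductive inL : A -> Prop :=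
| inL_x : inL X
| inL_y : inL Y
| inL_add f g : inL f -> inL g -> inL (aadd f g)
| inL_scale c f : inL f -> inL (ascale c f)
| inL_bracket f g : inL f -> inL g -> inL (bracket f g).

Definition ady_pow (n : nat) (f : A) : A := iter n (bracket Y) f.

(* A (x) A embedded in functions on pairs of words; a (x) b is (u,v) |-> a u * b v.
   L (x) L is the span of the elementary tensors a (x) b with a, b in L. *)
Definition T := (word * word) -> R.
Definition tens (f g : A) : T := fun p => f p.1 * g p.2.
Definition tzero : T := fun _ => 0.
Definition tadd (s t : T) : T := fun p => s p + t p.
Definition tsub (s t : T) : T := fun p => s p - t p.
Definition tscale (c : R) (t : T) : T := fun p => c * t p.
Definition tsum (N : nat) (f : nat -> T) : T := fun p => \sum_(k < N) f k p.

Inductive span (S : T -> Prop) : T -> Prop :=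
| span0 : span S tzero
| spanS t : S t -> span S t
| span_add s t : span S s -> span S t -> span S (tadd s t)
| span_scale c t : span S t -> span S (tscale c t).

Definition elemLL (t : T) : Prop := exists a b, [/\ inL a, inL b & t = tens a b].
Definition LL : T -> Prop := span elemLL.

(* Relations defining F(L) = (L (x) L) / K. *)
Definition relF (t : T) : Prop :=
  exists a b c, [/\ inL a, inL b, inL c &
    (t = tsub (tens a b) (tens b a) \/
     t = tsub (tens a (bracket b c)) (tens (bracket a b) c))].
Definition Kker : T -> Prop := span relF.

Definition eqF (s t : T) : Prop := Kker (tsub s t).

Definition xdeg2 (t : T) : Prop :=
  forall p, t p <> 0 -> (count negb p.1 + count negb p.2)%N = 2%N.

(* representative of delta_{2n} = Theta(x (x) ad_y^{2n}(x)) *)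
Definition delta (n : nat) : T := tens X (ady_pow (2 * n) X).

End FreeLie.

(* Main.v *)
Require Import Defs.
From mathcomp Require Import all_boot all_order all_algebra.
From mathcomp Require Import reals.
From Stdlib Require Import FunctionalExtensionality.
From mathcomp Require Import zify ring.
Set Implicit Arguments. Unset Strict Implicit. Unset Printing Implicit Defensive.
Import GRing.Theory Num.Theory.
Local Open Scope ring_scope.

Section Work.
Variable R : realType.

Local Notation A := (A R).
Local Notation T := (T R).
Local Notation XX := (X R).
Local Notation YY := (Y R).

Implicit Types (f g h : A).

Definition zeroA : A := fun _ => 0.
Definition asum (n : nat) (F : nat -> A) : A := fun w => \sum_(k < n) F k w.
Definition proj (i : nat) (f : A) : A := fun w => if count negb w == i then f w else 0.

Lemma cnt1 (a b i : nat) (x y : R) :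
  \sum_(j < i.+1) ((if a == j then x else 0) * (if b == (i - j)%N then y else 0))
  = if (a + b == i)%N then x * y else 0.
Proof.
case: (leqP a i) => hai.
  rewrite (bigD1 (Ordinal (hai : (a < i.+1)%N))) //= eqxx big1 ?addr0.
    have -> : (a + b == i)%N = (b == i - a)%N.
      by apply/eqP/eqP => [<-|->]; [rewrite addKn | rewrite subnKC].
    by case: (b == i - a)%N; rewrite ?mulr0 ?mulr1.
  move=> j hj; case: eqP => [haj|]; last by rewrite mul0r.
  by move: hj; rewrite -(inj_eq val_inj) /= haj eqxx.
rewrite big1; last first.
  move=> j _; case: eqP => [haj|]; last by rewrite mul0r.
  by move: (ltn_ord j); rewrite -haj ltnS leqNgt hai.
have -> : (a + b == i)%N = false.
  by apply/eqP => h; move: hai; rewrite -h ltnNge leq_addr.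
by [].
Qed.

Lemma cnt2 (a b i : nat) (x y : R) :
  \sum_(j < i.+1) ((if a == (i - j)%N then x else 0) * (if b == j then y else 0))
  = if (a + b == i)%N then x * y else 0.
Proof.
case: (leqP b i) => hbi.
  rewrite (bigD1 (Ordinal (hbi : (b < i.+1)%N))) //= eqxx big1 ?addr0.
    have -> : (a + b == i)%N = (a == i - b)%N.
      by apply/eqP/eqP => [<-|->]; [rewrite addnK | rewrite subnK].
    by case: (a == i - b)%N; rewrite ?mulr0 ?mulr1 ?mul0r.
  move=> j hj; case: (b =P j) => [hbj|]; last by rewrite mulr0.
  by move: hj; rewrite -(inj_eq val_inj) /= hbj eqxx.
rewrite big1; last first.
  move=> j _; case: (b =P j) => [hbj|]; last by rewrite mulr0.
  by move: (ltn_ord j); rewrite -hbj ltnS leqNgt hbi.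
have -> : (a + b == i)%N = false.
  by apply/eqP => h; move: hbi; rewrite -h ltnNge leq_addl.
by [].
Qed.

Lemma count_split (w : word) k :
  count negb w = (count negb (take k w) + count negb (drop k w))%N.
Proof. by rewrite -count_cat cat_take_drop. Qed.

Lemma proj_amul i f g :
  proj i (amul f g) = asum i.+1 (fun j => amul (proj j f) (proj (i - j) g)).
Proof.
apply: functional_extensionality => w; rewrite /proj /asum /amul.
rewrite exchange_big /=.
case: ifP => hw.
  apply: eq_bigr => k _; rewrite cnt1 -(count_split w k) hw //.
rewrite big1 // => k _; rewrite cnt1 -(count_split w k) hw //.
Qed.

Lemma proj_amul2 i f g :
  proj i (amul f g) = asum i.+1 (fun j => amul (proj (i - j) f) (proj j g)).
Proof.
apply: functional_extensionality => w; rewrite /proj /asum /amul.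
rewrite exchange_big /=.
case: ifP => hw.
  apply: eq_bigr => k _; rewrite cnt2 -(count_split w k) hw //.
rewrite big1 // => k _; rewrite cnt2 -(count_split w k) hw //.
Qed.

Lemma proj_bracket i f g :
  proj i (bracket f g) = asum i.+1 (fun j => bracket (proj j f) (proj (i - j) g)).
Proof.
have -> : proj i (bracket f g) = fun w => proj i (amul f g) w - proj i (amul g f) w.
  by apply: functional_extensionality => w; rewrite /proj /bracket; case: ifP; rewrite ?subr0.
rewrite proj_amul proj_amul2; apply: functional_extensionality => w.
by rewrite /asum /bracket -sumrB.
Qed.


Lemma inL_zero : inL zeroA.
Proof.
have -> : zeroA = ascale 0 XX.
  by apply: functional_extensionality => w; rewrite /ascale mul0r.
by apply: inL_scale; apply: inL_x.
Qed.

Lemma inL_asum n F : (forall k, (k < n)%N -> inL (F k)) -> inL (asum n F).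
Proof.
elim: n => [|n IH] H.
  have -> : asum 0 F = zeroA.
    by apply: functional_extensionality => w; rewrite /asum big_ord0.
  exact: inL_zero.
have -> : asum n.+1 F = aadd (asum n F) (F n).
  by apply: functional_extensionality => w; rewrite /asum /aadd big_ord_recr.
apply: inL_add; first by apply: IH => k hk; apply: H; apply: ltnW.
exact: H.
Qed.

Lemma proj_X i : proj i XX = if i == 1%N then XX else zeroA.
Proof.
apply: functional_extensionality => w; rewrite /proj /X /letter.
case: (w =P [:: false]) => [->|hw]; first by case: i => [|[|i]].
by move/eqP/negbTE: hw => hw; case: ifP => _; case: ifP => _; rewrite /= ?hw //.
Qed.

Lemma proj_Y i : proj i YY = if i == 0%N then YY else zeroA.
Proof.
apply: functional_extensionality => w; rewrite /proj /Y /letter.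
case: (w =P [:: true]) => [->|hw]; first by case: i => [|[|i]].
by move/eqP/negbTE: hw => hw; case: ifP => _; case: ifP => _; rewrite /= ?hw //.
Qed.

Lemma proj_add i f g : proj i (aadd f g) = aadd (proj i f) (proj i g).
Proof.
by apply: functional_extensionality => w; rewrite /proj /aadd; case: ifP; rewrite ?addr0.
Qed.

Lemma proj_scale i c f : proj i (ascale c f) = ascale c (proj i f).
Proof.
by apply: functional_extensionality => w; rewrite /proj /ascale; case: ifP; rewrite ?mulr0.
Qed.

Lemma projL i f : inL f -> inL (proj i f).
Proof.
move=> hf; elim: hf i => {f}.
- by move=> i; rewrite proj_X; case: ifP => _; [exact: inL_x | exact: inL_zero].
- by move=> i; rewrite proj_Y; case: ifP => _; [exact: inL_y | exact: inL_zero].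
- by move=> f g _ IHf _ IHg i; rewrite proj_add; apply: inL_add.
- by move=> c f _ IHf i; rewrite proj_scale; apply: inL_scale.
- move=> f g _ IHf _ IHg i; rewrite proj_bracket; apply: inL_asum => k _.
  by apply: inL_bracket.
Qed.

Lemma inL_ady k f : inL f -> inL (ady_pow k f).
Proof.
move=> hf; elim: k => [|k IH] //=.
by apply: inL_bracket => //; apply: inL_y.
Qed.

Lemma amulZl c f g : amul (ascale c f) g = ascale c (amul f g).
Proof.
apply: functional_extensionality => w; rewrite /amul /ascale mulr_sumr.
by apply: eq_bigr => k _; rewrite mulrA.
Qed.

Lemma amulZr c f g : amul f (ascale c g) = ascale c (amul f g).
Proof.
apply: functional_extensionality => w; rewrite /amul /ascale mulr_sumr.
by apply: eq_bigr => k _; rewrite mulrCA.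
Qed.

Lemma amulDl f g h : amul (aadd f g) h = aadd (amul f h) (amul g h).
Proof.
apply: functional_extensionality => w; rewrite /amul /aadd -big_split.
by apply: eq_bigr => k _; rewrite mulrDl.
Qed.

Lemma amulDr f g h : amul f (aadd g h) = aadd (amul f g) (amul f h).
Proof.
apply: functional_extensionality => w; rewrite /amul /aadd -big_split.
by apply: eq_bigr => k _; rewrite mulrDr.
Qed.

Lemma bracketZl c f g : bracket (ascale c f) g = ascale c (bracket f g).
Proof.
apply: functional_extensionality => w; rewrite /bracket amulZl amulZr /ascale.
by rewrite mulrBr.
Qed.

Lemma bracketZr c f g : bracket f (ascale c g) = ascale c (bracket f g).
Proof.
apply: functional_extensionality => w; rewrite /bracket amulZl amulZr /ascale.
by rewrite mulrBr.
Qed.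

Lemma bracketDl f g h : bracket (aadd f g) h = aadd (bracket f h) (bracket g h).
Proof.
apply: functional_extensionality => w; rewrite /bracket amulDl amulDr /aadd.
by rewrite opprD !addrA; congr (_ + _); rewrite -!addrA; congr (_ + _); rewrite addrC.
Qed.

Lemma bracketDr f g h : bracket f (aadd g h) = aadd (bracket f g) (bracket f h).
Proof.
apply: functional_extensionality => w; rewrite /bracket amulDl amulDr /aadd.
by rewrite opprD !addrA; congr (_ + _); rewrite -!addrA; congr (_ + _); rewrite addrC.
Qed.

Lemma bracket_anti f g : bracket g f = ascale (-1) (bracket f g).
Proof.
by apply: functional_extensionality => w; rewrite /bracket /ascale mulN1r opprB.
Qed.

Lemma bracket_self f : bracket f f = zeroA.
Proof. by apply: functional_extensionality => w; rewrite /bracket subrr. Qed.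

Lemma ascale_zero c : ascale c zeroA = zeroA.
Proof. by apply: functional_extensionality => w; rewrite /ascale mulr0. Qed.

Lemma bracket_zero f : bracket f zeroA = zeroA.
Proof.
apply: functional_extensionality => w; rewrite /bracket /amul /zeroA.
by rewrite !big1 ?subrr // => k _; rewrite ?mulr0 ?mul0r.
Qed.

Lemma bracket_zerol f : bracket zeroA f = zeroA.
Proof. by rewrite bracket_anti bracket_zero ascale_zero. Qed.

Lemma asum1 F : asum 1 F = F 0%N.
Proof. by apply: functional_extensionality => w; rewrite /asum big_ord1. Qed.

Lemma asum2 F : asum 2 F = aadd (F 0%N) (F 1%N).
Proof. by apply: functional_extensionality => w; rewrite /asum big_ord_recr big_ord1. Qed.

Lemma asum3 F : asum 3 F = aadd (aadd (F 0%N) (F 1%N)) (F 2%N).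
Proof. by apply: functional_extensionality => w; rewrite /asum !big_ord_recr big_ord0 /= add0r. Qed.


Lemma ascale0 f : ascale 0 f = zeroA.
Proof. by apply: functional_extensionality => w; rewrite /ascale mul0r. Qed.

Lemma ascale1 f : ascale 1 f = f.
Proof. by apply: functional_extensionality => w; rewrite /ascale mul1r. Qed.

Lemma ascaleA c d f : ascale c (ascale d f) = ascale (c * d) f.
Proof. by apply: functional_extensionality => w; rewrite /ascale mulrA. Qed.

Lemma ascaleD c d f : aadd (ascale c f) (ascale d f) = ascale (c + d) f.
Proof. by apply: functional_extensionality => w; rewrite /ascale /aadd mulrDl. Qed.

Lemma aadd0 f : aadd f zeroA = f.
Proof. by apply: functional_extensionality => w; rewrite /aadd /zeroA addr0. Qed.

Lemma bracket_sumr f n F : bracket f (asum n F) = asum n (fun k => bracket f (F k)).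
Proof.
apply: functional_extensionality => w; rewrite /bracket /asum /amul.
rewrite sumrB; congr (_ - _); rewrite exchange_big /=; apply: eq_bigr => i _.
  by rewrite mulr_sumr.
by rewrite mulr_suml.
Qed.

Definition adc (K : nat) (c : nat -> R) : A :=
  asum K (fun k => ascale (c k) (ady_pow k XX)).

Lemma adc_widen K K' c : (K <= K')%N ->
  adc K c = adc K' (fun k => if (k < K)%N then c k else 0).
Proof.
move=> hK; apply: functional_extensionality => w; rewrite /adc /asum /ascale.
rewrite (big_ord_widen _ (fun k => c k * ady_pow k XX w) hK) big_mkcond /=.
by apply: eq_bigr => k _; case: ifP; rewrite ?mul0r.
Qed.

Lemma adc_add K K' c c' : aadd (adc K c) (adc K' c') =
  adc (K + K') (fun k => (if (k < K)%N then c k else 0) + (if (k < K')%N then c' k else 0)).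
Proof.
rewrite (adc_widen c (leq_addr K' K)) (adc_widen c' (leq_addl K K')).
apply: functional_extensionality => w; rewrite /adc /asum /aadd /ascale -big_split /=.
by apply: eq_bigr => k _; rewrite mulrDl.
Qed.

Lemma adc_scale e K c : ascale e (adc K c) = adc K (fun k => e * c k).
Proof.
apply: functional_extensionality => w; rewrite /adc /asum /ascale mulr_sumr.
by apply: eq_bigr => k _; rewrite mulrA.
Qed.

Lemma bracket_Y_adc K c :
  bracket YY (adc K c) = adc K.+1 (fun k => if k is k'.+1 then c k' else 0).
Proof.
rewrite /adc bracket_sumr; apply: functional_extensionality => w.
rewrite /asum big_ord_recl /= /ascale mul0r add0r; apply: eq_bigr => k _.
by rewrite bracketZr /ascale.
Qed.

Lemma D0 f : inL f -> exists c, proj 0 f = ascale c YY.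
Proof.
elim => {f}.
- by exists 0; rewrite proj_X ascale0.
- by exists 1; rewrite proj_Y ascale1.
- move=> f g _ [c hc] _ [d hd]; exists (c + d).
  by rewrite proj_add hc hd ascaleD.
- move=> e f _ [c hc]; exists (e * c); by rewrite proj_scale hc ascaleA.
- move=> f g _ [c hc] _ [d hd]; exists 0.
  rewrite proj_bracket asum1 hc hd bracketZl bracketZr bracket_self.
  by rewrite !ascale_zero ascale0.
Qed.

Lemma D1 f : inL f -> exists K c, proj 1 f = adc K c.
Proof.
elim => {f}.
- exists 1%N, (fun _ => 1); rewrite proj_X /adc asum1 ascale1 //.
- exists 0%N, (fun _ => 0); rewrite proj_Y /=.
  by apply: functional_extensionality => w; rewrite /adc /asum big_ord0.
- move=> f g _ [K [c hc]] _ [K' [c' hc']]; eexists; eexists.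
  by rewrite proj_add hc hc' adc_add.
- move=> e f _ [K [c hc]]; eexists; eexists; by rewrite proj_scale hc adc_scale.
- move=> f g hf [K [c hc]] hg [K' [c' hc']].
  have [a ha] := D0 hf; have [b hb] := D0 hg.
  rewrite proj_bracket asum2 /= ha hb hc hc' bracketZl bracketZr (bracket_anti _ (adc K c)).
  rewrite ascaleA !bracket_Y_adc !adc_scale adc_add; eexists; eexists; reflexivity.
Qed.


Local Notation tz := (tzero R).
Implicit Types (s t u : T).

Lemma tens_addl f g h : tens (aadd f g) h = tadd (tens f h) (tens g h).
Proof. by apply: functional_extensionality => p; rewrite /tens /tadd /aadd mulrDl. Qed.
Lemma tens_addr f g h : tens f (aadd g h) = tadd (tens f g) (tens f h).
Proof. by apply: functional_extensionality => p; rewrite /tens /tadd /aadd mulrDr. Qed.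
Lemma tens_scalel c f g : tens (ascale c f) g = tscale c (tens f g).
Proof. by apply: functional_extensionality => p; rewrite /tens /tscale /ascale mulrA. Qed.
Lemma tens_scaler c f g : tens f (ascale c g) = tscale c (tens f g).
Proof. by apply: functional_extensionality => p; rewrite /tens /tscale /ascale mulrCA. Qed.
Lemma tens_zerol f : tens zeroA f = tz.
Proof. by apply: functional_extensionality => p; rewrite /tens /zeroA mul0r. Qed.
Lemma tens_zeror f : tens f zeroA = tz.
Proof. by apply: functional_extensionality => p; rewrite /tens /zeroA mulr0. Qed.
Lemma tens_suml n F g : tens (asum n F) g = tsum n (fun k => tens (F k) g).
Proof. by apply: functional_extensionality => p; rewrite /tens /tsum /asum mulr_suml. Qed.

Lemma Kker0 : Kker tz.
Proof. exact: span0. Qed.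
Lemma Kker_add s t : Kker s -> Kker t -> Kker (tadd s t).
Proof. exact: span_add. Qed.
Lemma Kker_scale c t : Kker t -> Kker (tscale c t).
Proof. exact: span_scale. Qed.
Lemma Kker_sub s t : Kker s -> Kker t -> Kker (tsub s t).
Proof.
move=> hs ht; have -> : tsub s t = tadd s (tscale (-1) t).
  by apply: functional_extensionality => p; rewrite /tsub /tadd /tscale mulN1r.
by apply: Kker_add => //; apply: Kker_scale.
Qed.

Lemma eqF_refl t : eqF t t.
Proof.
rewrite /eqF; have -> : tsub t t = tz.
  by apply: functional_extensionality => p; rewrite /tsub subrr.
exact: Kker0.
Qed.

Lemma eqF_eq s t : s = t -> eqF s t.
Proof. by move=> ->; apply: eqF_refl. Qed.

Lemma eqF_sym s t : eqF s t -> eqF t s.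
Proof.
rewrite /eqF => h; have -> : tsub t s = tscale (-1) (tsub s t).
  by apply: functional_extensionality => p; rewrite /tsub /tscale mulN1r opprB.
exact: Kker_scale.
Qed.

Lemma eqF_trans s t u : eqF s t -> eqF t u -> eqF s u.
Proof.
rewrite /eqF => h1 h2; have -> : tsub s u = tadd (tsub s t) (tsub t u).
  by apply: functional_extensionality => p; rewrite /tsub /tadd addrA subrK.
exact: Kker_add.
Qed.

Lemma eqF_add s1 s2 t1 t2 : eqF s1 t1 -> eqF s2 t2 -> eqF (tadd s1 s2) (tadd t1 t2).
Proof.
rewrite /eqF => h1 h2; have -> : tsub (tadd s1 s2) (tadd t1 t2) = tadd (tsub s1 t1) (tsub s2 t2).
  by apply: functional_extensionality => p; rewrite /tsub /tadd opprD addrACA.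
exact: Kker_add.
Qed.

Lemma eqF_scale c s t : eqF s t -> eqF (tscale c s) (tscale c t).
Proof.
rewrite /eqF => h; have -> : tsub (tscale c s) (tscale c t) = tscale c (tsub s t).
  by apply: functional_extensionality => p; rewrite /tsub /tscale mulrBr.
exact: Kker_scale.
Qed.

Lemma rel_sym (a b : A) : inL a -> inL b -> eqF (tens a b) (tens b a).
Proof.
move=> ha hb; apply: spanS; exists a, b, a; split => //; by left.
Qed.

Lemma rel_inv (a b c : A) : inL a -> inL b -> inL c ->
  eqF (tens a (bracket b c)) (tens (bracket a b) c).
Proof.
move=> ha hb hc; apply: spanS; exists a, b, c; split => //; by right.
Qed.

Definition good t := exists N (c : nat -> R), eqF t (tsum N (fun k => tscale (c k) (delta R k))).

Lemma good_eqF s t : eqF s t -> good t -> good s.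
Proof. by move=> h [N [c hc]]; exists N, c; apply: eqF_trans h hc. Qed.

Lemma tsum0 F : tsum 0 F = tz.
Proof. by apply: functional_extensionality => p; rewrite /tsum big_ord0. Qed.

Lemma good0 : good tz.
Proof. by exists 0%N, (fun _ => 0); rewrite tsum0; apply: eqF_refl. Qed.

Lemma tsum_widen N N' (c : nat -> R) F : (N <= N')%N ->
  tsum N (fun k => tscale (c k) (F k)) =
  tsum N' (fun k => tscale (if (k < N)%N then c k else 0) (F k)).
Proof.
move=> hN; apply: functional_extensionality => p; rewrite /tsum /tscale.
rewrite (big_ord_widen _ (fun k => c k * F k p) hN) big_mkcond /=.
by apply: eq_bigr => k _; case: ifP; rewrite ?mul0r.
Qed.

Lemma good_add s t : good s -> good t -> good (tadd s t).
Proof.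
move=> [N [c hc]] [N' [c' hc']].
exists (N + N')%N, (fun k => (if (k < N)%N then c k else 0) + (if (k < N')%N then c' k else 0)).
apply: eqF_trans (eqF_add hc hc') _; apply: eqF_eq.
rewrite (tsum_widen c _ (leq_addr N' N)) (tsum_widen c' _ (leq_addl N N')).
apply: functional_extensionality => p; rewrite /tsum /tadd /tscale -big_split /=.
by apply: eq_bigr => k _; rewrite mulrDl.
Qed.

Lemma good_scale e t : good t -> good (tscale e t).
Proof.
move=> [N [c hc]]; exists N, (fun k => e * c k).
apply: eqF_trans (eqF_scale e hc) _; apply: eqF_eq.
apply: functional_extensionality => p; rewrite /tsum /tscale mulr_sumr.
by apply: eq_bigr => k _; rewrite mulrA.
Qed.

Lemma good_tsum n F : (forall k, (k < n)%N -> good (F k)) -> good (tsum n F).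
Proof.
elim: n => [|n IH] H; first by rewrite tsum0; apply: good0.
have -> : tsum n.+1 F = tadd (tsum n F) (F n).
  by apply: functional_extensionality => p; rewrite /tsum /tadd big_ord_recr.
apply: good_add; last exact: H.
by apply: IH => k hk; apply: H; apply: ltnW.
Qed.

Lemma good_delta n : good (delta R n).
Proof.
exists n.+1, (fun k => if k == n then 1 else 0); apply: eqF_eq.
apply: functional_extensionality => p; rewrite /tsum /tscale big_ord_recr /= eqxx mul1r.
rewrite big1 ?add0r // => k _; by rewrite (ltn_eqF (ltn_ord k)) mul0r.
Qed.


Lemma inL_adX k : inL (ady_pow k XX).
Proof. by apply: inL_ady; apply: inL_x. Qed.

Lemma adyS k f : ady_pow k.+1 f = bracket YY (ady_pow k f).
Proof. by []. Qed.

Lemma tscaleA c d t : tscale c (tscale d t) = tscale (c * d) t.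
Proof. by apply: functional_extensionality => p; rewrite /tscale mulrA. Qed.

Lemma tscale1 t : tscale 1 t = t.
Proof. by apply: functional_extensionality => p; rewrite /tscale mul1r. Qed.

Lemma T1 k l : eqF (tens (ady_pow k XX) (ady_pow l XX))
                   (tscale ((-1) ^+ k) (tens XX (ady_pow (k + l) XX))).
Proof.
elim: k l => [|k IH] l; first by rewrite expr0 tscale1 add0n; apply: eqF_refl.
rewrite adyS.
have e1 : tens (bracket YY (ady_pow k XX)) (ady_pow l XX) =
          tscale (-1) (tens (bracket (ady_pow k XX) YY) (ady_pow l XX)).
  by rewrite (bracket_anti _ YY) tens_scalel.
rewrite e1; apply: eqF_trans (eqF_scale _ (eqF_sym (rel_inv (inL_adX k) (inL_y R) (inL_adX l)))) _.
rewrite -adyS; apply: eqF_trans (eqF_scale _ (IH l.+1)) _.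
by rewrite tscaleA -exprS addnS addSn; apply: eqF_refl.
Qed.

Lemma Kker_half t : Kker (tscale 2 t) -> Kker t.
Proof.
move=> h; have -> : t = tscale (2^-1) (tscale 2 t).
  apply: functional_extensionality => p; rewrite /tscale mulrA mulVf ?mul1r //.
  by rewrite pnatr_eq0.
exact: Kker_scale.
Qed.

Lemma T2 m : good (tens XX (ady_pow m XX)).
Proof.
case ho: (odd m).
  apply: (@good_eqF _ tz); last exact: good0.
  have h1 := eqF_trans (rel_sym (inL_x R) (inL_adX m)) (T1 m 0).
  move: h1; rewrite addn0 -signr_odd ho expr1 /eqF => h1.
  rewrite /eqF; apply: Kker_half.
  have -> : tscale 2 (tsub (tens XX (ady_pow m XX)) tz) =
            tsub (tens XX (ady_pow m XX)) (tscale (-1) (tens XX (ady_pow m XX))).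
    apply: functional_extensionality => p; rewrite /tscale /tsub /tzero subr0 mulN1r opprK.
    by rewrite mulr2n mulrDl mul1r.
  exact: h1.
have -> : m = (2 * m./2)%N by rewrite mul2n -[LHS]odd_double_half ho add0n.
exact: good_delta.
Qed.

Lemma T3 K c K' c' : good (tens (adc K c) (adc K' c')).
Proof.
rewrite /adc tens_suml; apply: good_tsum => k _.
rewrite tens_scalel; apply: good_scale.
have -> : tens (ady_pow k XX) (asum K' (fun k0 => ascale (c' k0) (ady_pow k0 XX))) =
   tsum K' (fun l => tscale (c' l) (tens (ady_pow k XX) (ady_pow l XX))).
  by apply: functional_extensionality => p; rewrite /tens /tsum /asum /tscale /ascale mulr_sumr;
     apply: eq_bigr => l _; rewrite mulrCA.
apply: good_tsum => l _; apply: good_scale.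
apply: good_eqF (T1 k l) _; apply: good_scale; exact: T2.
Qed.

Lemma T4 w : inL w -> eqF (tens YY (bracket YY w)) tz.
Proof.
move=> hw; apply: eqF_trans (rel_inv (inL_y R) (inL_y R) hw) _.
by rewrite bracket_self tens_zerol; apply: eqF_refl.
Qed.

Lemma G_Yw b : inL b -> good (tens YY (proj 2 b)).
Proof.
elim => {b}.
- by rewrite proj_X /= tens_zeror; apply: good0.
- by rewrite proj_Y /= tens_zeror; apply: good0.
- by move=> f g _ h1 _ h2; rewrite proj_add tens_addr; apply: good_add.
- by move=> e f _ h; rewrite proj_scale tens_scaler; apply: good_scale.
- move=> f g hf _ hg _.
  have [a ha] := D0 hf; have [b hb] := D0 hg.
  have [K [c hc]] := D1 hf; have [K' [c' hc']] := D1 hg.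
  rewrite proj_bracket asum3 (_ : (2 - 0 = 2)%N) // (_ : (2 - 1 = 1)%N) // (_ : (2 - 2 = 0)%N) //.
  rewrite tens_addr tens_addr; apply: good_add; first apply: good_add.
  + rewrite ha bracketZl tens_scaler; apply: good_scale.
    by apply: good_eqF (T4 (projL 2 hg)) good0.
  + apply: good_eqF (rel_inv (inL_y R) (projL 1 hf) (projL 1 hg)) _.
    by rewrite hc hc' bracket_Y_adc; apply: T3.
  + rewrite hb bracketZr (bracket_anti YY) tens_scaler tens_scaler; apply: good_scale.
    apply: good_scale; by apply: good_eqF (T4 (projL 2 hf)) good0.
Qed.


Definition pi2 t : T := fun p =>
  if (count negb p.1 + count negb p.2 == 2)%N then t p else 0.

Lemma pi2_tens (a b : A) : pi2 (tens a b) =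
  tadd (tadd (tens (proj 0 a) (proj 2 b)) (tens (proj 1 a) (proj 1 b)))
       (tens (proj 2 a) (proj 0 b)).
Proof.
apply: functional_extensionality => p; rewrite /pi2 /tens /tadd /proj.
case: (count negb p.1) => [|[|[|i]]]; case: (count negb p.2) => [|[|[|j]]];
  rewrite ?addSn ?addnS ?add0n ?addn0 /= ?mul0r ?mulr0 ?addr0 ?add0r //.
Qed.

Lemma pi2_id t : xdeg2 t -> pi2 t = t.
Proof.
move=> h; apply: functional_extensionality => p; rewrite /pi2.
case: eqP => // hp; case: (t p =P 0) => // /h //.
Qed.

Lemma good_pi2_tens (a b : A) : inL a -> inL b -> good (pi2 (tens a b)).
Proof.
move=> ha hb; have [x hx] := D0 ha; have [y hy] := D0 hb.
have [K [c hc]] := D1 ha; have [K' [c' hc']] := D1 hb.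
rewrite pi2_tens; apply: good_add; first apply: good_add.
- by rewrite hx tens_scalel; apply: good_scale; apply: G_Yw.
- by rewrite hc hc'; apply: T3.
- apply: good_eqF (rel_sym (projL 2 ha) (projL 0 hb)) _.
  by rewrite hy tens_scalel; apply: good_scale; apply: G_Yw.
Qed.

Lemma spanning t : LL t -> xdeg2 t -> good t.
Proof.
move=> hL hx; rewrite -(pi2_id hx); elim: hL {hx} => {t}.
- have -> : pi2 tz = tz.
    by apply: functional_extensionality => p; rewrite /pi2 /tzero; case: ifP.
  exact: good0.
- by move=> t [a [b [ha hb ->]]]; apply: good_pi2_tens.
- move=> s t _ hs _ ht; have -> : pi2 (tadd s t) = tadd (pi2 s) (pi2 t).
    by apply: functional_extensionality => p; rewrite /pi2 /tadd; case: ifP; rewrite ?addr0.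
  exact: good_add.
- move=> e t _ ht; have -> : pi2 (tscale e t) = tscale e (pi2 t).
    by apply: functional_extensionality => p; rewrite /pi2 /tscale; case: ifP; rewrite ?mulr0.
  exact: good_scale.
Qed.

Lemma ady_supp k (w : word) : (count negb w != 1)%N -> ady_pow k XX w = 0.
Proof.
elim: k w => [|k IH] w hw /=.
  rewrite /X /letter; case: (w =P [:: false]) => [he|] //.
  by move: hw; rewrite he.
rewrite /bracket /amul !big1 ?subrr // => i _.
  rewrite /Y /letter; case: (drop i w =P [:: true]) => [hd|]; last by rewrite mulr0.
  rewrite IH ?mul0r //; move: hw; rewrite (count_split w i) hd /=.
  by rewrite add0n addn0.
rewrite /Y /letter; case: (take i w =P [:: true]) => [hd2|]; last by rewrite mul0r.
rewrite IH ?mulr0 //; move: hw; rewrite (count_split w i) hd2 /=.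
by [].
Qed.


Local Notation MT := ('M[R]_2).

Fixpoint words (n : nat) : seq word :=
  if n is n'.+1 then [seq false :: w | w <- words n'] ++ [seq true :: w | w <- words n']
  else [:: [::]].

Lemma words_size n w : w \in words n -> size w = n.
Proof.
elim: n w => [|n IH] w /=; first by rewrite inE => /eqP ->.
rewrite mem_cat => /orP [] /mapP [z hv ->] /=; by rewrite IH.
Qed.

Lemma words_split (V : nmodType) i j (G : word -> word -> V) :
  \sum_(w <- words (i + j)) G (take i w) (drop i w) =
  \sum_(y <- words i) \sum_(z <- words j) G y z.
Proof.
elim: i G => [|i IH] G.
  rewrite add0n big_cons big_nil addr0; apply: eq_bigr => w _.
  by rewrite take0 drop0.
rewrite addSn /= !big_cat !big_map /=.
by rewrite (IH (fun y z => G (false :: y) z)) (IH (fun y z => G (true :: y) z)).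
Qed.

Lemma words_split' (V : nmodType) i d (G : word -> word -> V) : (i <= d)%N ->
  \sum_(w <- words d) G (take i w) (drop i w) =
  \sum_(y <- words i) \sum_(z <- words (d - i)) G y z.
Proof. by move=> h; rewrite -words_split subnKC. Qed.

Definition Pm : MT := \matrix_(i, j) (if i == j then 0 else 1).
Definition Qm : MT := \matrix_(i, j) (if i == j then (if i == 0 then 1 else -1) else 0).

Definition Mw (w : word) : MT := foldr (fun b m => (if b then Qm else Pm) * m) 1 w.

Lemma Mw_cat y z : Mw (y ++ z) = Mw y * Mw z.
Proof. by elim: y => [|b y IH] /=; rewrite ?mul1r // IH mulrA. Qed.

Definition rho (d : nat) (f : A) : MT := \sum_(w <- words d) f w *: Mw w.

Lemma rho_amul d f g :
  rho d (amul f g) = \sum_(i < d.+1) rho i f * rho (d - i) g.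
Proof.
rewrite /rho /amul.
have -> : \sum_(w <- words d) (\sum_(i < (size w).+1) f (take i w) * g (drop i w)) *: Mw w =
   \sum_(w <- words d) \sum_(i < d.+1) (f (take i w) * g (drop i w)) *: (Mw (take i w) * Mw (drop i w)).
  rewrite big_seq [RHS]big_seq; apply: eq_bigr => w hw.
  rewrite (words_size hw) scaler_suml; apply: eq_bigr => i _.
  by rewrite -Mw_cat cat_take_drop.
rewrite exchange_big /=; apply: eq_bigr => i _.
rewrite (words_split' (fun y z => (f y * g z) *: (Mw y * Mw z))); last by rewrite -ltnS.
rewrite mulr_suml; apply: eq_bigr => y _; rewrite mulr_sumr; apply: eq_bigr => z _.
by rewrite -scalerAl -scalerAr scalerA.
Qed.

Lemma rho_sub d f g : rho d (fun w => f w - g w) = rho d f - rho d g.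
Proof. by rewrite /rho -sumrB; apply: eq_bigr => w _; rewrite scalerBl. Qed.

Lemma rho_bracket d f g :
  rho d (bracket f g) = rho d (amul f g) - rho d (amul g f).
Proof. exact: rho_sub. Qed.


Lemma rho_letter d b :
  rho d (letter R b) = if d == 1%N then Mw [:: b] else 0.
Proof.
rewrite /rho /letter; case: ifP => [/eqP ->|hd].
  rewrite /= !big_cons !big_nil /=.
  by case: b; rewrite /= ?eqseq_cons ?eqxx /= ?scale1r ?scale0r ?add0r ?addr0.
rewrite big_seq big1 // => w hw; case: (w =P [:: b]) => [he|]; last by rewrite scale0r.
by move: (words_size hw); rewrite he => hd1; move: hd; rewrite -hd1.
Qed.

Lemma rho_X d : rho d XX = (d == 1%N)%:R *: Pm.
Proof. by rewrite rho_letter; case: ifP; rewrite ?scale1r ?scale0r //= mulr1. Qed.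

Lemma rho_Y d : rho d YY = (d == 1%N)%:R *: Qm.
Proof. by rewrite rho_letter; case: ifP; rewrite ?scale1r ?scale0r //= mulr1. Qed.

Lemma sum_pick (V : lmodType R) a d (F : nat -> V) :
  \sum_(i < d.+1) ((i == a :> nat)%:R *: F i) = if (a <= d)%N then F a else 0.
Proof.
rewrite (eq_bigr (fun i : 'I_d.+1 => if (i == a :> nat) then F i else 0)); last first.
  by move=> i _; case: ifP; rewrite ?scale1r ?scale0r.
by rewrite -big_mkcond big_ord1_eq ltnS.
Qed.

Definition adQ (m : MT) : MT := Qm * m - m * Qm.
Definition Ad (k : nat) : MT := iter k adQ Pm.

Lemma rho_ad d k : rho d (ady_pow k XX) = (d == k.+1)%:R *: Ad k.
Proof.
elim: k d => [|k IH] d; first exact: rho_X.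
rewrite adyS rho_bracket !rho_amul.
have -> : \sum_(i < d.+1) rho i YY * rho (d - i) (ady_pow k XX) =
          (d == k.+2)%:R *: (Qm * Ad k).
  under eq_bigr do rewrite rho_Y IH -scalerAl.
  rewrite (sum_pick _ _ (fun i => Qm * (((d - i)%N == k.+1)%:R *: Ad k))); case: d => [|d]; first by rewrite /= scale0r.
  by rewrite subSS subn0 /= -scalerAr.
have -> : \sum_(i < d.+1) rho i (ady_pow k XX) * rho (d - i) YY =
          (d == k.+2)%:R *: (Ad k * Qm).
  under eq_bigr do rewrite IH rho_Y -scalerAl.
  rewrite (sum_pick _ _ (fun i => Ad k * (((d - i)%N == 1%N)%:R *: Qm))); case: ifP => hk.
    rewrite -scalerAr; congr (_ *: _); congr (_%:R).
    by case: eqP => h1; case: eqP => h2 //; lia.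
  have -> : (d == k.+2) = false by apply/eqP => h; move: hk; rewrite h ltnW.
  by rewrite scale0r.
by rewrite -scalerBr.
Qed.


Lemma adQ_scale (c : R) m : adQ (c *: m) = c *: adQ m.
Proof. by rewrite /adQ scalerBr -scalerAl -scalerAr. Qed.

Lemma adQ2P : adQ (adQ Pm) = 4%:R *: Pm.
Proof.
apply/matrixP => i j; rewrite /adQ.
rewrite !mxE !big_ord_recr !big_ord0 /= !mxE !big_ord_recr !big_ord0 /= !mxE.
rewrite -!(inj_eq val_inj) /=.
case: i => [[|[|i]] hi] //; case: j => [[|[|j]] hj] //=; ring.
Qed.


Lemma trPP : \tr (Pm * Pm) = 2%:R.
Proof.
rewrite /mxtrace !big_ord_recr big_ord0 /= !mxE !big_ord_recr !big_ord0 /= !mxE.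
rewrite -!(inj_eq val_inj) /=; ring.
Qed.

Lemma Ad_even n : Ad (2 * n) = (4%:R ^+ n) *: Pm.
Proof.
elim: n => [|n IH]; first by rewrite scale1r.
rewrite mulnS /Ad /= -/(Ad (2 * n)) IH !adQ_scale adQ2P scalerA exprS mulrC.
by [].
Qed.


Definition pol n f : {poly MT} := \poly_(i < n.+1) rho i f.

Lemma coef_pol n f i : (i <= n)%N -> (pol n f)`_i = rho i f.
Proof. by move=> h; rewrite coef_poly ltnS h. Qed.

Lemma pol_mul_coef n f g d : (d <= n)%N -> (pol n f * pol n g)`_d = rho d (amul f g).
Proof.
move=> hd; rewrite coefM rho_amul; apply: eq_bigr => j _.
have hj : (j <= n)%N by apply: leq_trans hd; rewrite -ltnS.
by rewrite !coef_pol // (leq_trans (leq_subr _ _) hd).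
Qed.

Lemma coef_agree_r (p q r : {poly MT}) n : (forall j, (j <= n)%N -> p`_j = q`_j) ->
  (r * p)`_n = (r * q)`_n.
Proof. by move=> h; rewrite !coefM; apply: eq_bigr => j _; rewrite h // leq_subr. Qed.

Lemma coef_agree_l (p q r : {poly MT}) n : (forall j, (j <= n)%N -> p`_j = q`_j) ->
  (p * r)`_n = (q * r)`_n.
Proof. by move=> h; rewrite !coefM; apply: eq_bigr => j _; rewrite h // -ltnS. Qed.

Lemma tr_cyc (p q : {poly MT}) n : \tr ((p * q)`_n) = \tr ((q * p)`_n).
Proof.
rewrite !coefM !raddf_sum /= (reindex_inj rev_ord_inj) /=; apply: eq_bigr => j _.
rewrite subSS subKn; last by rewrite -ltnS.
exact: mxtrace_mulC.
Qed.

Definition phi n t : R := \sum_(i < n.+1) \sum_(y <- words i) \sum_(z <- words (n - i))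
   t (y, z) * \tr (Mw y * Mw z).

Lemma phi_tens' n (a b : A) :
  phi n (tens a b) = \tr (\sum_(i < n.+1) rho i a * rho (n - i) b).
Proof.
rewrite raddf_sum; apply: eq_bigr => i _ /=.
rewrite /rho mulr_suml raddf_sum; apply: eq_bigr => y _ /=.
rewrite mulr_sumr raddf_sum; apply: eq_bigr => z _ /=.
by rewrite -scalerAl -scalerAr scalerA !mxtraceZ /tens.
Qed.

Lemma phi_tens n (a b : A) : phi n (tens a b) = \tr ((pol n a * pol n b)`_n).
Proof.
rewrite phi_tens' coefM; congr (\tr _); apply: eq_bigr => i _.
by rewrite !coef_pol ?leq_subr // -ltnS.
Qed.

Lemma phi_add n s t : phi n (tadd s t) = phi n s + phi n t.
Proof.
rewrite /phi -big_split; apply: eq_bigr => i _; rewrite -big_split; apply: eq_bigr => y _.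
by rewrite -big_split; apply: eq_bigr => z _; rewrite /tadd mulrDl.
Qed.

Lemma phi_scale n c t : phi n (tscale c t) = c * phi n t.
Proof.
rewrite /phi mulr_sumr; apply: eq_bigr => i _; rewrite mulr_sumr; apply: eq_bigr => y _.
by rewrite mulr_sumr; apply: eq_bigr => z _; rewrite /tscale mulrA.
Qed.

Lemma phi_sub n s t : phi n (tsub s t) = phi n s - phi n t.
Proof.
rewrite /phi -sumrB; apply: eq_bigr => i _; rewrite -sumrB; apply: eq_bigr => y _.
by rewrite -sumrB; apply: eq_bigr => z _; rewrite /tsub mulrBl.
Qed.

Lemma phi_zero n : phi n tz = 0.
Proof.
rewrite /phi big1 // => i _; rewrite big1 // => y _; rewrite big1 // => z _.
by rewrite /tzero mul0r.
Qed.

Lemma pol_bracket n (b c : A) j : (j <= n)%N ->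
  (pol n (bracket b c))`_j = (pol n b * pol n c - pol n c * pol n b)`_j.
Proof.
by move=> hj; rewrite coef_pol // rho_bracket coefB !pol_mul_coef.
Qed.

Lemma phi_Kker n t : Kker t -> phi n t = 0.
Proof.
elim => {t}.
- exact: phi_zero.
- move=> t [a [b [c [ha hb hc [->|->]]]]]; rewrite phi_sub !phi_tens.
    by rewrite tr_cyc subrr.
  rewrite (@coef_agree_r _ _ (pol n a) n (@pol_bracket n b c)) (@coef_agree_l _ _ (pol n c) n (@pol_bracket n a b)).
  rewrite mulrBr mulrBl !coefB !raddfB /= !mulrA.
  rewrite (tr_cyc (pol n a * pol n c)) mulrA.
  by ring.
- by move=> s t _ hs _ ht; rewrite phi_add hs ht addr0.
- by move=> c t _ ht; rewrite phi_scale ht mulr0.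
Qed.


Lemma phi_tsum n N F : phi n (tsum N F) = \sum_(k < N) phi n (F k).
Proof.
elim: N => [|N IH]; first by rewrite tsum0 phi_zero big_ord0.
have -> : tsum N.+1 F = tadd (tsum N F) (F N).
  by apply: functional_extensionality => p; rewrite /tsum /tadd big_ord_recr.
by rewrite phi_add IH big_ord_recr.
Qed.

Lemma phi_delta m k :
  phi (2 * m).+2 (delta R k) = (m == k)%:R * (4%:R ^+ k * 2%:R).
Proof.
rewrite /delta phi_tens'.
under eq_bigr do rewrite rho_X rho_ad -scalerAl.
rewrite (sum_pick _ _ (fun i => Pm * ((((2 * m).+2 - i)%N == (2 * k).+1)%:R *: Ad (2 * k)))) /=.
rewrite subSS subn0 eqSS eqn_pmul2l // Ad_even -scalerAr !mxtraceZ.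
by rewrite -scalerAr mxtraceZ trPP.
Qed.

Lemma independence N (c : nat -> R) :
  eqF (tsum N (fun k => tscale (c k) (delta R k))) tz ->
  forall k, (k < N)%N -> c k = 0.
Proof.
move=> h m hm; have := phi_Kker (2 * m).+2 h.
rewrite phi_sub phi_zero subr0 phi_tsum.
under eq_bigr do rewrite phi_scale phi_delta.
rewrite (bigD1 (Ordinal hm)) //= eqxx mul1r big1 ?addr0; last first.
  move=> j hj; rewrite (_ : (m == j) = false) ?mul0r ?mulr0 //.
  by apply/negbTE; move: hj; rewrite -(inj_eq val_inj) /= eq_sym.
move/eqP; rewrite !mulf_eq0 expf_eq0 !pnatr_eq0 /=.
by rewrite andbF /= orbF => /eqP.
Qed.


Lemma part1 n : LL (delta R n) /\ xdeg2 (delta R n).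
Proof.
split.
  apply: spanS; exists XX, (ady_pow (2 * n) XX); split => //; first exact: inL_x.
  exact: inL_adX.
move=> p; rewrite /delta /tens => h.
have h1 : XX p.1 <> 0 by move=> e; apply: h; rewrite e mul0r.
have h2 : ady_pow (2 * n) XX p.2 <> 0 by move=> e; apply: h; rewrite e mulr0.
have -> : count negb p.2 = 1%N.
  by apply/eqP; case: (boolP (count negb p.2 == 1%N)) => // hc; case: h2; apply: ady_supp.
move: h1; rewrite /X /letter; case: (p.1 =P [:: false]) => [-> //|_ h1]; by case: h1.
Qed.

End Work.

Theorem mainTheorem6 (R : realType) :
  (* each delta_{2n} is the class of an element of L (x) L of x-degree 2 *)
  (forall n : nat, LL (delta R n) /\ xdeg2 (delta R n)) /\
  (* linear independence in F(L) *)
  (forall (N : nat) (c : nat -> R),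
      eqF (tsum N (fun k => tscale (c k) (delta R k))) (tzero R) ->
      forall k : nat, (k < N)%N -> c k = 0) /\
  (* spanning: every class of x-degree 2 is a combination of the delta_{2n} *)
  (forall t : T R, LL t -> xdeg2 t ->
      exists (N : nat) (c : nat -> R),
        eqF t (tsum N (fun k => tscale (c k) (delta R k)))).
Proof.
split; first exact: part1.
split; first exact: independence.
exact: spanning.
Qed.
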